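(* Let $(u_n)_{n \geq 0}$ be a sequence of integers, not identically zero, satisfying $u_n = a_1 u_{n-1} + \cdots + a_k u_{n-k}$ for all $n \geq k$, with $a_1, \ldots, a_k \in \mathbf{Z}$ and $a_k \neq 0$. Let $\mathbf{K}$ be the splitting field over $\mathbf{Q}$ of $f_u(X) = X^k - a_1 X^{k-1} - \cdots - a_k$, let $\alpha_1, \ldots, \alpha_r \in \mathbf{K}$ be the distinct roots of $f_u$, and let $g_1, \ldots, g_r \in \mathbf{K}[X]$ be the polynomials such that $u_n = \sum_{i=1}^r g_i(n)\alpha_i^n$ for all integers $n \geq 0$. Then $(u_n/n)_{n \geq 1}$ is a linear recurrence if and only if $g_1(0) = \cdots = g_r(0) = 0$. Moreover, in such a case the set $\mathcal{A}_u = \{n \in \mathbf{N} : \gcd(n, u_n) = 1\}$ is finite.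
   Context: $\mathbf{N}$ denotes the set of positive integers. A sequence is a linear recurrence if it satisfies a linear recurrence relation of finite order with constant (complex) coefficients. The polynomials $g_i$ in the representation $u_n = \sum_{i=1}^r g_i(n)\alpha_i^n$ exist and are uniquely determined by $(u_n)$. *)

(* Defs.v *)
From HB Require Import structures.
From mathcomp Require Import all_boot all_order all_algebra all_field.
Set Implicit Arguments. Unset Strict Implicit. Unset Printing Implicit Defensive.
Import Order.TTheory GRing.Theory Num.Theory.
Local Open Scope ring_scope.

Definition is_linrec (C : ringType) (v : nat -> C) : Prop :=
  exists (d : nat) (c : 'I_d -> C),
    forall n : nat, v (n + d)%N = \sum_(i < d) c i * v (n + i)%N.

Definition charpoly_rec (C : ringType) (k : nat) (a : nat -> int) : {poly C} :=
  'X^k - \sum_(1 <= i < k.+1) ((a i)%:~R : C) *: 'X^(k - i).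

Definition A_set (u : nat -> int) : nat -> Prop :=
  fun n => (0 < n)%N /\ gcdn n `|u n|%N = 1%N.

(* Main.v *)
Require Import Defs.
From HB Require Import structures.
From mathcomp Require Import all_boot all_order all_algebra all_field.
From mathcomp Require Import ring zify.
Import Order.TTheory GRing.Theory Num.Theory.
Local Open Scope ring_scope.
Set Implicit Arguments. Unset Strict Implicit.

Definition act (C : numClosedFieldType) (P : {poly C}) (s : nat -> C) (n : nat) : C :=
  \sum_(j < size P) P`_j * s (n + j)%N.

Lemma act_pad {C : numClosedFieldType} {P : {poly C}} {s n N} :
  (size P <= N)%N -> act P s n = \sum_(j < N) P`_j * s (n + j)%N.
Proof.
move=> hN; rewrite /act -(subnKC hN) big_split_ord /=.
rewrite [X in _ = _ + X]big1 ?addr0 // => i _.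
by rewrite nth_default ?mul0r // leq_addr.
Qed.

Lemma act_ext (C : numClosedFieldType) (P : {poly C}) s1 s2 n :
  (forall m, s1 m = s2 m) -> act P s1 n = act P s2 n.
Proof. by move=> h; apply: eq_bigr => i _; rewrite h. Qed.

Lemma act_addP (C : numClosedFieldType) (P Q : {poly C}) s n :
  act (P + Q) s n = act P s n + act Q s n.
Proof.
set N := maxn (size P) (size Q).
rewrite (act_pad (leq_trans (size_polyD P Q) (leqnn N))).
rewrite (act_pad (leq_maxl (size P) (size Q))) (act_pad (leq_maxr (size P) (size Q))).
by rewrite -big_split /=; apply: eq_bigr => i _; rewrite coefD mulrDl.
Qed.

Lemma act_scaleP (C : numClosedFieldType) (c : C) (P : {poly C}) s n :
  act (c *: P) s n = c * act P s n.
Proof.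
rewrite (act_pad (size_scale_leq c P)) /act mulr_sumr.
by apply: eq_bigr => i _; rewrite coefZ mulrA.
Qed.

Lemma act_C (C : numClosedFieldType) (c : C) s n : act c%:P s n = c * s n.
Proof.
rewrite (act_pad (size_polyC_leq1 c)) big_ord1 coefC addn0 /=.
done.
Qed.

Lemma size_mulX_le (C : numClosedFieldType) (P : {poly C}) : (size (P * 'X)%R <= (size P).+1)%N.
Proof. by have [->|nz] := eqVneq P 0; rewrite ?mul0r ?size_poly0 // size_mulX. Qed.

Lemma act_mulX (C : numClosedFieldType) (P : {poly C}) s n :
  act (P * 'X) s n = act P s n.+1.
Proof.
rewrite (act_pad (size_mulX_le P)).
rewrite big_ord_recl coefMX eqxx mul0r add0r (act_pad (leqnn (size P))).
by apply: eq_bigr => i _; rewrite coefMX /= addnS.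
Qed.

Lemma act0s (C : numClosedFieldType) (P : {poly C}) n : act P (fun _ => 0) n = 0.
Proof. by apply: big1 => i _; rewrite mulr0. Qed.

Lemma act_mul (C : numClosedFieldType) (P Q : {poly C}) s n :
  act (P * Q) s n = act P (act Q s) n.
Proof.
elim/poly_ind: P n => [|P c IH] n.
  by rewrite mul0r /act size_poly0 !big_ord0.
rewrite mulrDl act_addP -mulrA (mulrC 'X) mulrA act_mulX IH.
rewrite act_addP act_mulX; congr (_ + _).
by rewrite mul_polyC act_scaleP act_C.
Qed.

Lemma act_sum (C : numClosedFieldType) (P : {poly C}) (r : nat) (s : 'I_r -> nat -> C) n :
  act P (fun m => \sum_(i < r) s i m) n = \sum_(i < r) act P (s i) n.
Proof.
rewrite /act exchange_big /=; apply: eq_bigr => j _; by rewrite mulr_sumr.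
Qed.

Lemma act_XsubC (C : numClosedFieldType) (c : C) s n :
  act ('X - c%:P) s n = s n.+1 - c * s n.
Proof.
rewrite -[X in X - _]mul1r act_addP -polyCN act_mulX -[1]/(1%:P) !act_C.
by rewrite mul1r mulNr.
Qed.

Lemma size_shift_lt (C : numClosedFieldType) (p : {poly C}) :
  p != 0 -> (size (p \Po ('X + 1) - p)%R < size p)%N.
Proof.
move=> pnz.
have s2 : size ('X + 1 : {poly C}) = 2 by rewrite -polyC1 size_XaddC.
have hs : size (p \Po ('X + 1)) = size p by rewrite size_comp_poly2.
have hl : lead_coef (p \Po ('X + 1)) = lead_coef p.
  by rewrite lead_coef_comp ?s2 // -polyC1 lead_coefXaddC expr1n mulr1.
have hle : (size (p \Po ('X + 1) - p)%R <= size p)%N.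
  by rewrite (leq_trans (size_polyD _ _)) // size_polyN hs maxnn.
rewrite ltn_neqAle hle andbT; apply/negP => /eqP he.
have : (p \Po ('X + 1) - p)`_(size p).-1 = 0.
  by rewrite coefB -hs -!lead_coefE hl hs subrr.
move/eqP; rewrite -he -lead_coefE lead_coef_eq0 => /eqP h0.
by move: he; rewrite h0 size_poly0 => /esym/eqP; rewrite size_poly_eq0 (negPf pnz).
Qed.

Lemma act_exppoly (C : numClosedFieldType) (N : nat) (p : {poly C}) (al : C) n :
  (size p <= N)%N -> act (('X - al%:P) ^+ N) (fun m => p.[m%:R] * al ^+ m) n = 0.
Proof.
elim: N p n => [|N IH] p n hs.
  move: hs; rewrite leqn0 size_poly_eq0 => /eqP ->.
  by rewrite expr0 -[1]/(1%:P) act_C horner0 !mul0r mulr0.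
rewrite exprSr act_mul.
set q := al *: (p \Po ('X + 1) - p).
have hq : (size q <= N)%N.
  have [p0|pnz] := eqVneq p 0.
    by rewrite /q p0 comp_poly0 subr0 scaler0 size_poly0.
  by rewrite /q (leq_trans (size_scale_leq _ _)) // -ltnS (leq_trans (size_shift_lt pnz)).
rewrite (act_ext _ (s2 := fun m => q.[m%:R] * al ^+ m)); first by apply: IH.
move=> m; rewrite act_XsubC /q hornerZ hornerD hornerN horner_comp !hornerE.
rewrite -natr1 exprS.
set x := p.[_ + 1]; set y := p.[m%:R]; set z := al ^+ m.
rewrite mulrBr mulrBl; congr (_ - _).
by rewrite mulrA (mulrC x).
Qed.

Lemma act_ann (C : numClosedFieldType) (T Q : {poly C}) s :
  (forall n, act Q s n = 0) -> forall n, act (T * Q) s n = 0.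
Proof. by move=> h n; rewrite act_mul (act_ext _ (s2 := fun _ => 0)) ?act0s. Qed.

Lemma poly_nat0 (C : numClosedFieldType) (p : {poly C}) :
  (forall n : nat, p.[n%:R] = 0) -> p = 0.
Proof.
move=> h; apply/eqP; apply/negPn/negP => pnz.
have h1 : all (root p) [seq (i%:R : C) | i <- iota 0 (size p)].
  by apply/allP => x /mapP [i _ ->]; apply/rootP.
have h2 : uniq [seq (i%:R : C) | i <- iota 0 (size p)].
  rewrite map_inj_uniq ?iota_uniq // => i j /eqP; rewrite eqr_nat => /eqP.
  done.
have := max_poly_roots pnz h1 h2.
by rewrite size_map size_iota ltnn.
Qed.

Lemma coef_top_comp (C : numClosedFieldType) (p : {poly C}) :
  (p \Po ('X + 1))`_(size p).-1 = lead_coef p.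
Proof.
have s2 : size ('X + 1 : {poly C}) = 2 by rewrite -polyC1 size_XaddC.
have hs : size (p \Po ('X + 1)) = size p by rewrite size_comp_poly2.
rewrite -hs -lead_coefE lead_coef_comp ?s2 //.
by rewrite -polyC1 lead_coefXaddC expr1n mulr1.
Qed.

Lemma exppoly_uniq (C : numClosedFieldType) (r : nat) (al : 'I_r -> C) :
  injective al -> (forall i, al i != 0) ->
  forall (P : 'I_r -> {poly C}),
  (forall n : nat, \sum_(i < r) (P i).[n%:R] * al i ^+ n = 0) -> forall i, P i = 0.
Proof.
move=> alinj alnz P hP.
suff: forall m (P : 'I_r -> {poly C}), (\sum_(i < r) size (P i) <= m)%N ->
  (forall n : nat, \sum_(i < r) (P i).[n%:R] * al i ^+ n = 0) -> forall i, P i = 0.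
  by move=> H; apply: (H _ P (leqnn _) hP).
clear P hP.
elim=> [|m IH] P hs hP.
  move=> i; apply/eqP; rewrite -size_poly_eq0 -leqn0.
  by apply: leq_trans hs; rewrite (bigD1 i) //= leq_addr.
case: (pickP (fun i => P i != 0)) => [i0 hi0|hall]; last first.
  by move=> i; apply/eqP; move: (hall i) => /= /negbFE.
pose Q i := al i *: (P i \Po ('X + 1)) - al i0 *: P i.
have hQ : forall n : nat, \sum_(i < r) (Q i).[n%:R] * al i ^+ n = 0.
  move=> n.
  have -> : \sum_(i < r) (Q i).[n%:R] * al i ^+ n =
     \sum_(i < r) (P i).[n.+1%:R] * al i ^+ n.+1 - al i0 * \sum_(i < r) (P i).[n%:R] * al i ^+ n.
    rewrite mulr_sumr -sumrB; apply: eq_bigr => i _.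
    rewrite /Q hornerD hornerN !hornerZ horner_comp !hornerE -natr1 exprS.
    by rewrite mulrBl !mulrA (mulrC _ (P i).[_]).
  by rewrite !hP mulr0 subr0.
have hsQ : forall i, (size (Q i) <= size (P i))%N.
  move=> i; rewrite /Q (leq_trans (size_polyD _ _)) // size_polyN geq_max.
  rewrite (leq_trans (size_scale_leq _ _)) ?size_comp_poly2 //; last by rewrite -polyC1 size_XaddC.
  by rewrite size_scale_leq.
have hsQ0 : (size (Q i0) < size (P i0))%N.
  rewrite /Q -scalerBr (leq_ltn_trans (size_scale_leq _ _)) //.
  exact: size_shift_lt.
have hQ0 : forall i, Q i = 0.
  apply: IH => //.
  rewrite -ltnS (leq_trans _ hs) // (bigD1 i0) //= [X in (_ < X)%N](bigD1 i0) //=.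
  by rewrite -addSn leq_add // leq_sum.
have hPi : forall i, i != i0 -> P i = 0.
  move=> i hi; apply/eqP; apply/negPn/negP => pnz.
  have : (Q i)`_(size (P i)).-1 = (al i - al i0) * lead_coef (P i).
    by rewrite /Q coefB !coefZ coef_top_comp -lead_coefE mulrBl.
  rewrite hQ0 coef0 => /esym/eqP; rewrite mulf_eq0 lead_coef_eq0 (negPf pnz) orbF subr_eq0.
  by move/eqP/alinj => /eqP; rewrite (negPf hi).
have : P i0 = 0.
  apply: poly_nat0 => n; move: (hP n); rewrite (bigD1 i0) //= big1 ?addr0.
    by move/eqP; rewrite mulf_eq0 expf_eq0 (negPf (alnz i0)) andbF orbF => /eqP.
  by move=> i hi; rewrite hPi // horner0 mul0r.
by move/eqP; rewrite (negPf hi0).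
Qed.

Lemma charpoly_monic (R : nzRingType) k a : (0 < k)%N -> charpoly_rec R k a \is monic.
Proof.
move=> hk; rewrite /charpoly_rec monicE lead_coefDl ?lead_coefXn //.
rewrite size_polyN size_polyXn ltnS big_nat_cond.
apply: (big_ind (fun p : {poly R} => (size p <= k)%N)).
- by rewrite size_poly0.
- by move=> p q hp hq; rewrite (leq_trans (size_polyD _ _)) // geq_max hp hq.
move=> i /andP [/andP [hi1 hi2] _]; rewrite (leq_trans (size_scale_leq _ _)) // size_polyXn.
by rewrite ltn_subrL hk hi1.
Qed.

Lemma charpoly_map (C : numClosedFieldType) k a :
  charpoly_rec C k a = map_poly intr (charpoly_rec int k a).
Proof.
rewrite /charpoly_rec rmorphB /= map_polyXn rmorph_sum /=; congr (_ - _).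
by apply: eq_bigr => i _; rewrite map_polyZ map_polyXn /= intz.
Qed.

Lemma charpoly_at0 (C : numClosedFieldType) k a : (0 < k)%N ->
  (charpoly_rec C k a).[0] = - (a k)%:~R.
Proof.
move=> hk; rewrite /charpoly_rec hornerD hornerN hornerXn expr0n.
rewrite gtn_eqF // add0r horner_sum; congr (- _).
rewrite big_nat_recr //= big1_seq ?add0r.
  by rewrite hornerZ subnn hornerXn expr0 mulr1.
move=> i /andP [_]; rewrite mem_index_iota => /andP [h1 h2].
by rewrite hornerZ hornerXn expr0n subn_eq0 leqNgt h2 mulr0.
Qed.

Lemma ann_w (C : numClosedFieldType) (u : nat -> int) (f : {poly C})
  (r : nat) (alpha : 'I_r -> C) (hroots : forall i, root f (alpha i))
  (g : 'I_r -> {poly C})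
  (hg : forall n : nat, ((u n)%:~R : C) = \sum_(i < r) (g i).[n%:R] * alpha i ^+ n)
  (hg0 : forall i, (g i).[0] = 0) :
  exists N, forall n, act (f ^+ N) (fun n : nat => ((u n.+1)%:~R : C) / (n.+1)%:R) n = 0.
Proof.
pose h i := g i %/ 'X.
have gh : forall i, g i = h i * 'X.
  move=> i; rewrite /h; have := divpK (d := 'X - 0%:P) (p := g i).
  by rewrite dvdp_XsubCl /root hg0 eqxx subr0 => ->.
pose p i := alpha i *: (h i \Po ('X + 1)).
exists (\max_(i < r) size (p i)) => n.
rewrite (act_ext _ (s2 := fun m => \sum_(i < r) (p i).[m%:R] * alpha i ^+ m)).
  rewrite act_sum big1 // => i _.
  have [q hq] := factor_theorem _ _ (hroots i).
  rewrite hq exprMn; apply: act_ann => m; apply: act_exppoly.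
  exact: (leq_bigmax (F := fun i => size (p i)) i).
move=> m; rewrite hg mulr_suml; apply: eq_bigr => i _.
rewrite gh hornerM hornerX /p hornerZ horner_comp !hornerE natr1 exprS.
have nz : (m.+1%:R : C) != 0 by rewrite pnatr_eq0.
rewrite -[_ * _ * (_ * _)]mulrA (mulrC (m.+1%:R)) mulrA mulfK //.
by rewrite mulrA (mulrC (h i).[_]).
Qed.

Lemma act_monic (C : numClosedFieldType) (F : {poly C}) s n : F \is monic ->
  act F s n = \sum_(j < (size F).-1) F`_j * s (n + j)%N + s (n + (size F).-1)%N.
Proof.
move=> mF; have sF : size F = (size F).-1.+1.
  by rewrite prednK // lt0n size_poly_eq0 monic_neq0.
rewrite /act; move: (lead_coefE F); rewrite (monicP mF).
move: (size F) sF => m -> h1.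
by rewrite big_ord_recr /= -h1 mul1r.
Qed.

Lemma linrec_of_ann (C : numClosedFieldType) (F : {poly C}) s : F \is monic ->
  (forall n, act F s n = 0) -> is_linrec s.
Proof.
move=> mF h; exists (size F).-1, (fun i => - F`_i) => n.
move: (h n); rewrite act_monic // => /eqP; rewrite addrC addr_eq0 => /eqP ->.
by rewrite -sumrN; apply: eq_bigr => i _; rewrite mulNr.
Qed.

Definition isint (C : numClosedFieldType) (x : C) := exists z : int, x = z%:~R.

Lemma isintD (C : numClosedFieldType) (x y : C) : isint x -> isint y -> isint (x + y).
Proof. by move=> [z1 ->] [z2 ->]; exists (z1 + z2); rewrite intrD. Qed.
Lemma isintM (C : numClosedFieldType) (x y : C) : isint x -> isint y -> isint (x * y).
Proof. by move=> [z1 ->] [z2 ->]; exists (z1 * z2); rewrite intrM. Qed.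
Lemma isintN (C : numClosedFieldType) (x : C) : isint x -> isint (- x).
Proof. by move=> [z1 ->]; exists (- z1); rewrite intrN. Qed.

Lemma int_rec (C : numClosedFieldType) (F : {poly int}) (t : nat -> C) :
  F \is monic -> (forall n, act (map_poly intr F) t n = 0) ->
  (forall j, (j < (size F).-1)%N -> isint (t j)) -> forall n, isint (t n).
Proof.
move=> mF h hj n; elim/ltn_ind: n => n IH.
case: (ltnP n (size F).-1) => [/hj //|hn].
have mFc : map_poly (intr : int -> C) F \is monic by apply: monic_map.
have sz : size (map_poly (intr : int -> C) F) = size F.
  by apply: size_map_inj_poly => //; apply: intr_inj.
move: (h (n - (size F).-1)%N); rewrite act_monic // sz subnK // => /eqP.
rewrite addrC addr_eq0 => /eqP ->; apply: isintN.
apply: (big_ind (fun x : C => isint x)).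
- by exists 0.
- exact: isintD.
move=> j _; apply: isintM; first by rewrite coef_map; eexists.
apply: IH; have := ltn_ord j; lia.
Qed.

Lemma g0_of_linrec (C : numClosedFieldType) (u : nat -> int) (r : nat)
  (alpha : 'I_r -> C) (alinj : injective alpha) (alnz : forall i, alpha i != 0)
  (g : 'I_r -> {poly C})
  (hg : forall n : nat, ((u n)%:~R : C) = \sum_(i < r) (g i).[n%:R] * alpha i ^+ n) :
  is_linrec (fun n : nat => ((u n.+1)%:~R : C) / (n.+1)%:R) -> forall i, (g i).[0] = 0.
Proof.
move=> [d [c hc]] i0.
pose R (j : nat) : C := if @insub _ (fun j => (j < d)%N) 'I_d j is Some j' then - c j' else 1.
have Rw : forall j : 'I_d, R j = - c j by move=> j; rewrite /R valK.
have Rd : R d = 1 by rewrite /R insubF ?ltnn.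
pose v n : C := ((u n.+1)%:~R : C) / (n.+1)%:R.
have hrel : forall n, \sum_(j < d.+1) R j * v (n + j)%N = 0.
  move=> n; rewrite big_ord_recr /= Rd mul1r.
  have -> : \sum_(j < d) R (widen_ord (leqnSn d) j) * v (n + widen_ord (leqnSn d) j)%N
     = - \sum_(j < d) c j * v (n + j)%N.
    by rewrite -sumrN; apply: eq_bigr => j _; rewrite /= Rw mulNr.
  by rewrite [v (n + d)%N]/v hc addNr.
pose Lp (j : 'I_d.+1) : {poly C} := \prod_(l < d.+1 | l != j) ('X + (l.+1%:R)%:P).
have hclaim : forall n : nat,
    \sum_(j < d.+1) R j * (u (n + j).+1)%:~R * (Lp j).[n%:R] = 0.
  move=> n; transitivity (\sum_(j < d.+1) R j * v (n + j)%N * \prod_(l < d.+1) (n%:R + l.+1%:R));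
    last by rewrite -mulr_suml hrel mul0r.
  apply: eq_bigr => j _.
  rewrite (bigD1 j) //= /Lp horner_prod /v.
  have nz : (((n + j).+1)%:R : C) != 0 by rewrite pnatr_eq0.
  have -> : (n%:R + j.+1%:R : C) = ((n + j).+1)%:R by rewrite -natrD addnS.
  rewrite -!mulrA; congr (_ * (_ * _)); rewrite mulKf //.
  by apply: eq_bigr => l _; rewrite hornerD hornerX hornerC.
pose P i := \sum_(j < d.+1) (R j * alpha i ^+ j.+1) *: ((g i \Po ('X + (j.+1%:R)%:P)) * Lp j).
have hP : forall n : nat, \sum_(i < r) (P i).[n%:R] * alpha i ^+ n = 0.
  move=> n; rewrite -[RHS](hclaim n).
  under eq_bigr => i _ do rewrite /P horner_sum mulr_suml.
  rewrite exchange_big /=; apply: eq_bigr => j _.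
  rewrite hg mulr_sumr mulr_suml; apply: eq_bigr => i _.
  rewrite hornerZ hornerM horner_comp hornerD hornerX hornerC.
  have -> : (n%:R + j.+1%:R : C) = ((n + j).+1)%:R by rewrite -natrD addnS.
  rewrite -addnS exprD.
  set A := (g i).[_]; set B := (Lp j).[_]; set x := alpha i ^+ n; set y := alpha i ^+ j.+1.
  ring.
have P0 := exppoly_uniq alinj alnz hP i0.
have := congr1 (fun p => p.[- (d.+1%:R)]) P0.
rewrite /= horner0 /P horner_sum big_ord_recr /= big1; last first.
  move=> j _; rewrite hornerZ hornerM.
  rewrite /Lp horner_prod (bigD1 ord_max) /=; last first.
    by rewrite neq_ltn /= ltn_ord orbT.
  by rewrite hornerD hornerX hornerC addNr mul0r !mulr0.
rewrite add0r hornerZ hornerM horner_comp hornerD hornerX hornerC addNr Rd mul1r.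
move/eqP; rewrite !mulf_eq0 expf_eq0 (negPf (alnz i0)) andbF /=.
case/orP => [/eqP //|].
rewrite /Lp horner_prod prodf_seq_eq0 => /hasP [l _] /andP [hl].
rewrite hornerD hornerX hornerC.
have -> : (1 *- d.+1 : C) = - (d.+1%:R) by [].
rewrite addrC subr_eq0 eqr_nat eqSS => hle.
by move: hl; rewrite -val_eqE /= (eqP hle) eqxx.
Qed.

Unset Implicit Arguments.

Theorem lemma2p1 (C : numClosedFieldType) (u : nat -> int) (k : nat)
  (a : nat -> int)
  (hk : (0 < k)%N) (hak : a k != 0)
  (hu0 : exists n, u n != 0)
  (hrec : forall n : nat, (k <= n)%N ->
            u n = \sum_(1 <= i < k.+1) a i * u (n - i)%N)
  (r : nat) (alpha : 'I_r -> C) (halpha_inj : injective alpha)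
  (halpha_roots : forall x : C, root (charpoly_rec C k a) x <-> exists i, alpha i = x)
  (g : 'I_r -> {poly C})
  (hg : forall n : nat, ((u n)%:~R : C) = \sum_(i < r) (g i).[n%:R] * alpha i ^+ n) :
  (is_linrec (fun n : nat => ((u n.+1)%:~R : C) / (n.+1)%:R)
     <-> (forall i : 'I_r, (g i).[0] = 0))
  /\ ((forall i : 'I_r, (g i).[0] = 0) ->
      exists N : nat, forall n : nat, A_set u n -> (n <= N)%N).
Proof.
have hroots : forall i, root (charpoly_rec C k a) (alpha i).
  by move=> i; apply/halpha_roots; exists i.
have alnz : forall i, alpha i != 0.
  move=> i; apply/eqP => h0; move: (hroots i); rewrite h0 /root charpoly_at0 //.
  by rewrite oppr_eq0 intr_eq0 (negPf hak).
have mF : forall N, (charpoly_rec C k a) ^+ N \is monic.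
  by move=> N; apply: monic_exp; apply: charpoly_monic.
split; first split.
- exact: (g0_of_linrec halpha_inj alnz hg).
- move=> hg0; have [N hN] := ann_w hroots hg hg0.
  exact: (linrec_of_ann (mF N) hN).
move=> hg0; have [N hN] := ann_w hroots hg hg0.
pose Fz := (charpoly_rec int k a) ^+ N.
have mFz : Fz \is monic by apply: monic_exp; apply: charpoly_monic.
have hFz : map_poly intr Fz = (charpoly_rec C k a) ^+ N.
  by rewrite /Fz rmorphXn /= -charpoly_map.
pose d := (size Fz).-1.
pose D := d`!.
pose t n : C := D%:R * (((u n.+1)%:~R : C) / (n.+1)%:R).
have ht : forall n, isint (t n).
  apply: (int_rec mFz).
    move=> n; rewrite hFz /act /t.
    transitivity (D%:R * act ((charpoly_rec C k a) ^+ N) (fun n : nat => ((u n.+1)%:~R : C) / (n.+1)%:R) n);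
      last by rewrite hN mulr0.
    by rewrite /act mulr_sumr; apply: eq_bigr => j _; rewrite mulrCA.
  move=> j hj; exists ((D %/ j.+1)%:Z * u j.+1).
  have hdv : (j.+1 %| D)%N by apply: dvdn_fact; rewrite ltn0Sn /=.
  rewrite /t intrM /=.
  have -> : (D%:R : C) = (D %/ j.+1)%:R * j.+1%:R by rewrite -natrM divnK.
  have nz : (j.+1%:R : C) != 0 by rewrite pnatr_eq0.
  by rewrite [_ / _]mulrC mulrA mulfK.

exists D => n [hn hgcd].
case: n hn hgcd => [//|m] _ hgcd.
have [z hz] := ht m.
have hz' : (D%:Z * u m.+1 = m.+1%:Z * z)%R.
  apply: (@intr_inj C); rewrite !intrM /=.
  have nz : (m.+1%:R : C) != 0 by rewrite pnatr_eq0.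
  by rewrite -hz /t [_ / _]mulrC mulrCA mulVKf.
have : (m.+1 %| D * `|u m.+1|)%N.
  by apply/dvdnP; exists `|z|%N; have := congr1 absz hz'; rewrite !abszM /= => ->; rewrite mulnC.
rewrite mulnC Gauss_dvdr; last by rewrite /coprime hgcd.
by apply: dvdn_leq; apply: fact_gt0.
Qed.
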